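(* Let $n\geq 2$ be an integer and $\zeta\in\mathbb{R}$. For $(x,y_{1},\ldots,y_{n})\in\mathbb{R}^{n+1}$ write $P(\zeta)=x+\zeta y_{1}+\cdots+\zeta^{n}y_{n}$ and $P^{\prime}(\zeta)=y_{1}+2\zeta y_{2}+\cdots+n\zeta^{n-1}y_{n}$. For real $Q>1$ and $R>0$ define \begin{align*} \chi_{A}(Q)&:=\{(x,y_{1},\ldots,y_{n})\in\mathbb{R}^{n+1}: \vert P(\zeta)\vert\leq Q^{-1}\},\\ \chi_{B}(R)&:=\{(x,y_{1},\ldots,y_{n})\in\mathbb{R}^{n+1}: \vert P^{\prime}(\zeta)\vert\leq R\},\\ \chi_{C}(Q)&:=\{(x,y_{1},\ldots,y_{n})\in\mathbb{R}^{n+1}: \vert y_{t}\vert\leq Q^{1/n},\ 1\leq t\leq n\}. \end{align*} Then there is a constant $E=E(n,\zeta)$ independent of $Q$ and $R$ such that for all sufficiently large $Q$ and all $R>0$, \[ \mathrm{vol}\left(\chi_{A}(Q)\cap\chi_{B}(R)\cap\chi_{C}(Q)\right)\leq E\,R\,Q^{-1/n}. \]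
   Context: $\mathrm{vol}$ denotes $(n+1)$-dimensional Lebesgue measure. *)

(* Defs.v *)
From HB Require Import structures.
From mathcomp Require Import all_boot all_order all_algebra.
From mathcomp Require Import all_classical all_reals all_analysis.
Set Implicit Arguments. Unset Strict Implicit. Unset Printing Implicit Defensive.
Import Order.TTheory GRing.Theory Num.Theory.
Local Open Scope classical_set_scope.
Local Open Scope ring_scope.

(* Points of R^k are represented as sequences
   s = [:: s_0; ...; s_(k-1)] of length k; only such sequences are ever
   evaluated by [iterint k].  k-dimensional Lebesgue measure of a (Borel) set
   is given, via Tonelli, by the iterated one-dimensional Lebesgue integral of
   its indicator function. *)

Fixpoint iterint (R : realType) (k : nat) (f : seq R -> \bar R) : \bar R :=
  match k with
  | 0 => f [::]
  | k'.+1 => (\int[@lebesgue_measure R]_(t in [set: R])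
                 iterint k' (fun s => f (t :: s)))%E
  end.

Definition vol (R : realType) (k : nat) (A : set (seq R)) : \bar R :=
  iterint k (fun s => (\1_A s)%:E).

(* s = [:: x; y_1; ...; y_n] *)
Definition Pz (R : realType) (n : nat) (zeta : R) (s : seq R) : R :=
  \sum_(i < n.+1) nth 0 s i * zeta ^+ i.

Definition dPz (R : realType) (n : nat) (zeta : R) (s : seq R) : R :=
  \sum_(1 <= i < n.+1) i%:R * zeta ^+ i.-1 * nth 0 s i.

Definition chiA (R : realType) (n : nat) (zeta Q : R) : set (seq R) :=
  [set s | `|Pz n zeta s| <= Q^-1].

Definition chiB (R : realType) (n : nat) (zeta Rr : R) : set (seq R) :=
  [set s | `|dPz n zeta s| <= Rr].

Definition chiC (R : realType) (n : nat) (Q : R) : set (seq R) :=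
  [set s | forall t : nat, (1 <= t <= n)%N -> `|nth 0 s t| <= Q `^ (n%:R^-1)].

(* Main.v *)
Require Import Defs.
From HB Require Import structures.
From mathcomp Require Import all_boot all_order all_algebra.
From mathcomp Require Import all_classical all_reals all_analysis.
From mathcomp Require Import lra ring.
Import Order.TTheory GRing.Theory Num.Theory.
Local Open Scope classical_set_scope.
Local Open Scope ring_scope.

Section S.
Variable R : realType.
Local Notation mu := (@lebesgue_measure R).

Lemma int_le (f g : R -> \bar R) : (forall x, 0 <= f x)%E -> (forall x, f x <= g x)%E ->
  (\int[mu]_(x in [set: R]) f x <= \int[mu]_(x in [set: R]) g x)%E.
Proof.
move=> f0 fg.
have g0 : forall x, (0 <= g x)%E by move=> x; exact: le_trans (f0 x) (fg x).
rewrite !ge0_integralTE //.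
apply: le_ereal_sup => _ [h /= hf <-]; exists h => //= x; exact: le_trans (hf x) (fg x).
Qed.

Lemma int_itv (c a r : R) : 0 <= c -> 0 <= r ->
  (\int[mu]_(x in [set: R]) (c * \1_(`[a - r, a + r]%classic) x)%:E = (c * (2 * r))%:E)%E.
Proof.
move=> c0 r0.
have h := @integralZl_indic _ _ _ mu setT measurableT (fun=> `[a-r,a+r]%classic) c.
rewrite /= in h; rewrite h //; last first.
  by move=> /lt_le_trans /(_ c0); rewrite ltxx.
rewrite integral_indic // setIT.
transitivity (c%:E * (if (a - r)%:E < (a + r)%:E then (a + r)%:E - (a - r)%:E else 0))%E.
  congr (_ * _)%E; exact: (lebesgue_measure_itv `[a - r, a + r]).
rewrite lte_fin.
case: ifP => hh; last first.
  move/negbT: hh; rewrite -leNgt => hh.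
  have -> : r = 0 by lra.
  by rewrite mule0 !mulr0.
rewrite -EFinD -EFinM; congr (_%:E); lra.
Qed.
Lemma nth_cat_t (q s : seq R) t i :
  nth 0 (q ++ t :: s) i = nth 0 (q ++ 0 :: s) i + (i == size q)%:R * t.
Proof.
rewrite !nth_cat; case: ltnP => h.
  by rewrite (ltn_eqF h) mul0r addr0.
case E: (i - size q)%N => [|k] /=.
  have -> : i = size q by apply/eqP; rewrite eqn_leq h -subn_eq0 E.
  by rewrite eqxx mul1r add0r.
have -> : (i == size q) = false by apply/negbTE/negP => /eqP hi; by rewrite hi subnn in E.
by rewrite mul0r addr0.
Qed.

Lemma Pz_lin n zeta (q s : seq R) t : (size q <= n)%N ->
  Pz n zeta (q ++ t :: s) = Pz n zeta (q ++ 0 :: s) + t * zeta ^+ size q.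
Proof.
move=> hq; rewrite /Pz.
under eq_bigr do rewrite nth_cat_t mulrDl.
rewrite big_split /=; congr (_ + _).
under eq_bigr do rewrite -mulrA mulr_natl mulrb.
rewrite -big_mkcond /= (big_ord1_eq _ (fun j => t * zeta ^+ j)) ltnS hq //.
Qed.

Lemma dPz_lin n zeta (q s : seq R) t : (size q <= n)%N ->
  dPz n zeta (q ++ t :: s) = dPz n zeta (q ++ 0 :: s) + (size q)%:R * zeta ^+ (size q).-1 * t.
Proof.
move=> hq; rewrite /dPz.
under eq_bigr do rewrite nth_cat_t mulrDr.
rewrite big_split /=; congr (_ + _).
under eq_bigr do rewrite mulrA mulrC mulrA mulr_natr mulrb.
rewrite -big_mkcond /= (big_nat1_eq _ (fun j => t * (j%:R * zeta ^+ j.-1))) ltnS hq andbT.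
case: (posnP (size q)) => [->|h]; first by rewrite !mul0r.
by rewrite mulrC.
Qed.

Lemma iterint_ge0 k (f : seq R -> \bar R) : (forall s, 0 <= f s)%E -> (0 <= iterint k f)%E.
Proof.
elim: k f => [|k IH] f f0 /=; first exact: f0.
by apply: integral_ge0 => t _; apply: IH => s.
Qed.

Lemma iterint_le k (f g : seq R -> \bar R) : (forall s, 0 <= f s)%E ->
  (forall s, f s <= g s)%E -> (iterint k f <= iterint k g)%E.
Proof.
elim: k f g => [|k IH] f g f0 fg /=; first exact: fg.
apply: int_le => t; first by apply: iterint_ge0.
by apply: IH.
Qed.

Lemma iterint0 k (f : seq R -> \bar R) : (forall s, size s = k -> f s = 0%E) ->
  iterint k f = 0%E.
Proof.
elim: k f => [|k IH] f f0 /=; first exact: f0.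
apply: integral0_eq => t _; apply: IH => s hs; apply: f0; by rewrite /= hs.
Qed.

Lemma step (f : seq R -> \bar R) k p c a r : (forall s, 0 <= f s)%E -> 0 <= c -> 0 <= r ->
 (forall t, iterint k (fun s => f (p ++ t :: s)) <= c%:E)%E ->
 (forall t s, size s = k -> r < `|t - a| -> f (p ++ t :: s) = 0%E) ->
 (iterint k.+1 (fun s => f (p ++ s)) <= (c * (2 * r))%:E)%E.
Proof.
move=> f0 c0 r0 H1 H2 /=; rewrite -(@int_itv c a r c0 r0).
apply: int_le => t; first by apply: iterint_ge0.
rewrite indicE; case: (boolP (t \in _)) => ht.
  by rewrite mulr1; apply: H1.
rewrite mulr0 iterint0 // => s hs; apply: H2 => //.
move/negP: ht => ht.
have : ~~ (t \in `[a - r, a + r]) by apply/negP => h; apply: ht; exact: mem_set.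
rewrite in_itv /=.
rewrite negb_and -!ltNge ltr_normr => /orP [h|h]; apply/orP; [right|left]; lra.
Qed.

Lemma box (f : seq R -> \bar R) K k p c B : (forall s, 0 <= f s)%E -> 0 <= c -> 0 <= B ->
 (forall q, size q = (size p + k)%N -> (iterint K (fun s => f (q ++ s)) <= c%:E)%E) ->
 (forall q t s, (size p <= size q < size p + k)%N -> B < `|t| -> f (q ++ t :: s) = 0%E) ->
 (iterint (K + k) (fun s => f (p ++ s)) <= (c * (2 * B) ^+ k)%:E)%E.
Proof.
move=> f0 c0 B0; elim: k p => [|k IH] p H1 H2.
  by rewrite addn0 expr0 mulr1; apply: H1; rewrite addn0.
rewrite addnS exprSr mulrA.
apply: (@step f _ p _ 0) => //.
- by apply: mulr_ge0 => //; apply: exprn_ge0; rewrite mulr_ge0.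
- move=> t.
  have -> : (fun s => f (p ++ t :: s)) = (fun s => f (rcons p t ++ s)).
    by apply: funext => s; rewrite cat_rcons.
  apply: IH.
    by move=> q hq; apply: H1; rewrite hq size_rcons addSnnS.
  move=> q u s; rewrite size_rcons => /andP [h1 h2]; apply: H2.
  by rewrite (ltnW h1) -addSnnS.
- move=> t s _ h; apply: (H2 p) => //; first by rewrite leqnn /= -addn1 leq_add2l.
  by rewrite -(subr0 t).
Qed.

Lemma keyQ (Q : R) m : 0 < Q ->
  (Q `^ (m.+2)%:R^-1) ^+ m.+1 * Q^-1 = Q `^ (- (m.+2)%:R^-1).
Proof.
move=> Q0.
rewrite -powR_mulrn ?powR_ge0 // -powRrM -(powR_inv1 (ltW Q0)) -powRD; last first.
  by apply/implyP => _; rewrite gt_eqF.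
congr (_ `^ _).
have h : (0 : R) < (m.+1)%:R by rewrite ltr0Sn.
rewrite -[m.+2]addn1 natrD; field; lra.
Qed.

Lemma indic_E (S : set (seq R)) s : ~ S s -> (\1_S s : R)%:E = 0%E :> \bar R.
Proof. by move=> h; rewrite indicE memNset. Qed.

Lemma indic_le1 (S : set (seq R)) s : ((\1_S s : R)%:E <= 1)%E.
Proof. by rewrite indicE lee_fin; case: (_ \in _). Qed.

Lemma indic_ge0' (S : set (seq R)) s : (0 <= (\1_S s : R)%:E)%E.
Proof. by rewrite indicE lee_fin; case: (_ \in _). Qed.

Lemma Pz0 n (s : seq R) : Pz n 0 s = nth 0 s 0.
Proof.
rewrite /Pz big_ord_recl /= expr0 mulr1 big1 ?addr0 // => i _.
by rewrite expr0n /= mulr0.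
Qed.

Lemma dPz0 n (s : seq R) : (0 < n)%N -> dPz n 0 s = nth 0 s 1.
Proof.
move=> n0; rewrite /dPz big_ltn ?ltnS //.
have -> : (1%:R * 0 ^+ 1.-1 : R) = 1 by rewrite mul1r expr0.
rewrite mul1r big_nat_cond big1 ?addr0 //.
move=> i /andP [/andP [hi _] _].
by case: i hi => [|[|i]] //= _; rewrite expr0n /= mulr0 mul0r.
Qed.

Lemma case0 m (Q Rr : R) : 1 < Q -> 0 < Rr ->
 (vol (m.+2).+1 (chiA m.+2 0 Q `&` chiB m.+2 0 Rr `&` chiC m.+2 Q)
   <= (2^+(m.+3) * Rr * Q `^ (- (m.+2)%:R^-1))%:E)%E.
Proof.
move=> Q1 R0.
set S := _ `&` _.
pose f := fun s => (\1_S s : R)%:E.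
set Kb := Q `^ (m.+2)%:R^-1.
have Q0 : 0 < Q by lra.
have Kb1 : 1 <= Kb by rewrite /Kb -{1}(powRr0 Q); apply: ler_powR; [lra | rewrite invr_ge0].
have f0 : forall s, (0 <= f s)%E by move=> s; exact: indic_ge0'.
have -> : (2^+(m.+3) * Rr * Q `^ (- (m.+2)%:R^-1)) =
    ((1 * (2*Kb)^+(m.+1)) * (2*Rr)) * (2 * Q^-1).
  by rewrite -keyQ // -/Kb exprMn !exprS; ring.
rewrite /vol; apply: (@step f _ [::] _ 0) => //.
- by rewrite !mulr_ge0 ?exprn_ge0 // ?mulr_ge0 //; lra.
- by rewrite invr_ge0 ltW.
- move=> t.
  apply: (@step f _ [:: t] _ 0) => //.
  + by rewrite !mulr_ge0 ?exprn_ge0 // ?mulr_ge0 //; lra.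
  + lra.
  + move=> u.
    apply: (@box f 0 m.+1 [:: t; u] 1 Kb) => //; first lra.
      by move=> q _ /=; exact: indic_le1.
    move=> q v s /= /andP [h1 h2] hv; apply: indic_E => -[_ hC].
    have := hC (size q); rewrite nth_cat ltnn subnn /= => /(_ _) hh.
    have : `|v| <= Kb by apply: hh; apply/andP; split; [exact: ltnW | exact: h2].
    by rewrite leNgt hv.
  + move=> u s _ hu; apply: indic_E => -[[_ hB] _].
    move: hB; rewrite /chiB /= dPz0 // /=; rewrite subr0 in hu.
    by rewrite leNgt hu.
- move=> t s _ ht; apply: indic_E => -[[hA _] _].
  move: hA; rewrite /chiA /= Pz0 /=; rewrite subr0 in ht.
  by rewrite leNgt ht.
Qed.

Lemma lvlL m (zeta A0 B0 t u Q' Rr : R) : zeta != 0 ->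
  `|A0 + u * zeta ^+ m.+2 + t * zeta ^+ m.+1| <= Q' ->
  `|B0 + (m.+2)%:R * zeta ^+ m.+1 * u + (m.+1)%:R * zeta ^+ m * t| <= Rr ->
  `|t - (- ((m.+2)%:R * A0 / zeta - B0) / zeta ^+ m)| <=
    ((m.+2)%:R / `|zeta| * Q' + Rr) / `|zeta| ^+ m.
Proof.
move=> z0 hP hP'.
have zm : zeta ^+ m != 0 by rewrite expf_neq0.
have hN : (m.+2)%:R = (m.+1)%:R + 1 :> R by rewrite natr1.
have e : t - (- ((m.+2)%:R * A0 / zeta - B0) / zeta ^+ m) =
   ((m.+2)%:R / zeta * (A0 + u * zeta ^+ m.+2 + t * zeta ^+ m.+1) -
    (B0 + (m.+2)%:R * zeta ^+ m.+1 * u + (m.+1)%:R * zeta ^+ m * t)) / zeta ^+ m.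
  rewrite hN !exprS; field; by rewrite z0 zm.
rewrite e normf_div normrX ler_wpM2r ?invr_ge0 ?exprn_ge0 //.
rewrite (le_trans (ler_normB _ _)) // lerD // normrM normf_div.
rewrite [`|_%:R|]ger0_norm ?ler0n //.
by rewrite ler_wpM2l // mulr_ge0 ?invr_ge0 ?ler0n.
Qed.

Lemma lvlU (c1 c2 A1 B1 u Q' Rr : R) : c1 != 0 -> c2 != 0 ->
  `|A1 + u * c1| <= Q' -> `|B1 + c2 * u| <= Rr ->
  `|u - (if Q' / `|c1| <= Rr / `|c2| then - A1 / c1 else - B1 / c2)| <=
    (if Q' / `|c1| <= Rr / `|c2| then Q' / `|c1| else Rr / `|c2|).
Proof.
move=> h1 h2 hA hB.
have e1 : u - (- A1 / c1) = (A1 + u * c1) / c1 by field.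
have e2 : u - (- B1 / c2) = (B1 + c2 * u) / c2 by field.
case: ifP => _.
  by rewrite e1 normrM normfV ler_wpM2r ?invr_ge0.
by rewrite e2 normrM normfV ler_wpM2r ?invr_ge0.
Qed.

Lemma Pz_bound n zeta (w : seq R) B : 0 <= B ->
  (forall i, (i <= n)%N -> `|nth 0 w i| <= B) ->
  `|Pz n zeta w| <= B * \sum_(i < n.+1) `|zeta| ^+ i.
Proof.
move=> B0 hw; rewrite /Pz mulr_sumr (le_trans (ler_norm_sum _ _ _)) //.
apply: ler_sum => i _; rewrite normrM normrX ler_wpM2r ?exprn_ge0 //.
by apply: hw; rewrite -ltnS.
Qed.

Lemma final_arith m (a N Q' Rr Kb Z : R) : 0 < a -> 0 < N -> 0 <= Q' -> Q' <= 1 ->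
  0 < Rr -> 1 <= Kb -> 0 <= Z ->
  (((1 * (2 * (if Q' / a^+m.+2 <= Rr / (N * a^+m.+1) then Q' / a^+m.+2 else Rr / (N * a^+m.+1))))
     * (2 * ((N / a * Q' + Rr) / a ^+ m))) * (2*Kb)^+m) * (2 * (Q' + Kb * Z))
  <= (16 * 2^+m * (1 + Z) / (a^+m.+2 * a^+m)) * Rr * (Kb ^+ m.+1 * Q').
Proof.
move=> a0 N0 Q0 Q1 R0 K1 Z0.
set r1 := Q' / a^+m.+2; set r2 := Rr / (N * a^+m.+1).
set rmin := if r1 <= r2 then r1 else r2.
have am : 0 < a ^+ m by rewrite exprn_gt0.
have am1 : 0 < a ^+ m.+1 by rewrite exprn_gt0.
have am2 : 0 < a ^+ m.+2 by rewrite exprn_gt0.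
have r10 : 0 <= r1 by rewrite divr_ge0 // ltW.
have r20 : 0 <= r2 by rewrite divr_ge0 ?ltW // mulr_gt0.
have [hm1 hm2] : rmin <= r1 /\ rmin <= r2.
  by rewrite /rmin; case: ifP => h; split => //; rewrite ?lexx //; apply: ltW; rewrite ltNge h.
have hm0 : 0 <= rmin by rewrite /rmin; case: ifP.
have e1 : r2 * (N / a * Q') = Rr * Q' / a ^+ m.+2.
  rewrite /r2 !exprS; field; rewrite !gt_eqF //.
have i1 : rmin * (N / a * Q') <= Rr * Q' / a ^+ m.+2.
  rewrite -e1 ler_wpM2r // mulr_ge0 // divr_ge0 // ltW //.
have i2 : rmin * Rr <= Rr * Q' / a ^+ m.+2.
  by rewrite [rmin * Rr]mulrC -mulrA ler_wpM2l // ltW.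
have hmin : rmin * ((N / a * Q' + Rr) / a ^+ m) <= 2 * Rr * Q' / (a^+m.+2 * a^+m).
  have -> : rmin * ((N / a * Q' + Rr) / a ^+ m) = (rmin * (N / a * Q') + rmin * Rr) / a^+m.
    by rewrite mulrA mulrDr.
  have -> : 2 * Rr * Q' / (a^+m.+2 * a^+m) = (Rr * Q' / a ^+ m.+2 + Rr * Q' / a ^+ m.+2) / a^+m.
    by field; rewrite !gt_eqF.
  by rewrite ler_wpM2r ?lerD // invr_ge0 ltW.
have hX : Q' + Kb * Z <= Kb * (1 + Z) by rewrite mulrDr mulr1 lerD2r; lra.
have K0 : 0 <= Kb by lra.
have -> : ((1 * (2 * rmin)) * (2 * ((N / a * Q' + Rr) / a ^+ m)) * (2*Kb)^+m) * (2 * (Q' + Kb * Z))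
   = 8 * (rmin * ((N / a * Q' + Rr) / a ^+ m)) * ((2 * Kb)^+m * (Q' + Kb * Z)) by ring.
apply: (@le_trans _ _ (8 * (2 * Rr * Q' / (a^+m.+2 * a^+m)) * ((2 * Kb)^+m * (Kb * (1 + Z))))).
  apply: ler_pM => //. all: try (by rewrite !(mulr_ge0, addr_ge0, divr_ge0, invr_ge0, exprn_ge0) // ?ltW).
  - by rewrite ler_wpM2l.
  - by rewrite ler_wpM2l // exprn_ge0 // mulr_ge0.
rewrite exprMn !exprS le_eqVlt; apply/orP; left; apply/eqP; field; rewrite !gt_eqF //.
Qed.

Lemma Pz2 m zeta (q : seq R) t u : size q = m.+1 ->
  Pz m.+2 zeta (q ++ [:: t; u]) = Pz m.+2 zeta (q ++ [:: 0; 0]) + u * zeta^+m.+2 + t * zeta^+m.+1.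
Proof.
move=> hq; rewrite Pz_lin ?hq // -cat_rcons Pz_lin ?size_rcons ?hq // cat_rcons //.
Qed.

Lemma dPz2 m zeta (q : seq R) t u : size q = m.+1 ->
  dPz m.+2 zeta (q ++ [:: t; u]) = dPz m.+2 zeta (q ++ [:: 0; 0])
    + (m.+2)%:R * zeta^+m.+1 * u + (m.+1)%:R * zeta^+m * t.
Proof.
move=> hq; rewrite dPz_lin ?hq // -cat_rcons dPz_lin ?size_rcons ?hq // cat_rcons //.
Qed.

Lemma Pz1 m zeta (w : seq R) u : size w = m.+2 ->
  Pz m.+2 zeta (w ++ [:: u]) = Pz m.+2 zeta (w ++ [:: 0]) + u * zeta^+m.+2.
Proof. by move=> hw; rewrite Pz_lin hw. Qed.

Lemma dPz1 m zeta (w : seq R) u : size w = m.+2 ->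
  dPz m.+2 zeta (w ++ [:: u]) = dPz m.+2 zeta (w ++ [:: 0]) + (m.+2)%:R * zeta^+m.+1 * u.
Proof. by move=> hw; rewrite dPz_lin hw. Qed.

Definition EN m (zeta : R) := 16 * 2^+m * (1 + \sum_(i < m.+3) `|zeta|^+i) /
  (`|zeta|^+m.+2 * `|zeta|^+m).

Lemma caseNZ m (zeta Q Rr : R) : zeta != 0 -> 1 < Q -> 0 < Rr ->
 (vol (m.+2).+1 (chiA m.+2 zeta Q `&` chiB m.+2 zeta Rr `&` chiC m.+2 Q)
   <= (EN m zeta * Rr * Q `^ (- (m.+2)%:R^-1))%:E)%E.
Proof.
move=> z0 Q1 R0.
set S := _ `&` _.
pose f := fun s => (\1_S s : R)%:E.
set Kb := Q `^ (m.+2)%:R^-1.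
have Q0 : 0 < Q by lra.
have Kb1 : 1 <= Kb by rewrite /Kb -{1}(powRr0 Q); apply: ler_powR; [lra | rewrite invr_ge0].
have f0 : forall s, (0 <= f s)%E by move=> s; exact: indic_ge0'.
have Q'0 : 0 <= Q^-1 by rewrite invr_ge0 ltW.
have Q'1 : Q^-1 <= 1 by rewrite invf_le1 // ltW.
have a0 : 0 < `|zeta| by rewrite normr_gt0.
have N0 : (0:R) < (m.+2)%:R by rewrite ltr0Sn.
pose rmin := if Q^-1 / `|zeta ^+ m.+2| <= Rr / `|(m.+2)%:R * zeta ^+ m.+1|
  then Q^-1 / `|zeta ^+ m.+2| else Rr / `|(m.+2)%:R * zeta ^+ m.+1|.
pose rL := ((m.+2)%:R / `|zeta| * Q^-1 + Rr) / `|zeta| ^+ m.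
pose Z := \sum_(i < m.+3) `|zeta| ^+ i.
pose X0 := Q^-1 + Kb * Z.
have hrmin : 0 <= rmin by rewrite /rmin; case: ifP => _; rewrite divr_ge0 // ltW.
have hrL : 0 <= rL.
  by rewrite /rL divr_ge0 ?exprn_ge0 ?addr_ge0 ?mulr_ge0 ?divr_ge0 // ltW.
have Z0 : 0 <= Z by rewrite /Z sumr_ge0 // => i _; rewrite exprn_ge0.
have K0 : 0 <= Kb by lra.
have X00 : 0 <= X0 by rewrite /X0 addr_ge0 // mulr_ge0.
have c3 : 0 <= 1 * (2 * rmin) by rewrite mul1r mulr_ge0.
have c2 : 0 <= 1 * (2 * rmin) * (2 * rL) by rewrite mulr_ge0 // mulr_ge0.
have c1 : 0 <= 1 * (2 * rmin) * (2 * rL) * (2 * Kb)^+m.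
  by rewrite mulr_ge0 // exprn_ge0 // mulr_ge0.
apply: (@le_trans _ _ ((((1 * (2 * rmin)) * (2 * rL)) * (2 * Kb)^+m) * (2 * X0))%:E).
  rewrite /vol; apply: (@step f _ [::] _ 0) => //.
  - move=> t; apply: (@box f 2 m [:: t] _ Kb) => //.
    + move=> q hq /=.
      apply: (@step f 1 q _ (- ((m.+2)%:R * Pz m.+2 zeta (q ++ [::0;0]) / zeta
          - dPz m.+2 zeta (q ++ [::0;0])) / zeta ^+ m) rL) => //.
      * move=> t'.
        have -> : (fun s => f (q ++ t' :: s)) = (fun s => f (rcons q t' ++ s)).
          by apply: funext => s; rewrite cat_rcons.
        apply: (@step f 0 (rcons q t') 1
          (if Q^-1 / `|zeta ^+ m.+2| <= Rr / `|(m.+2)%:R * zeta ^+ m.+1|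
           then - Pz m.+2 zeta (rcons q t' ++ [::0]) / zeta ^+ m.+2
           else - dPz m.+2 zeta (rcons q t' ++ [::0]) / ((m.+2)%:R * zeta ^+ m.+1)) rmin) => //.
        - by move=> u; exact: indic_le1.
        - move=> u s; case: s => // _ hu; apply: indic_E => -[[hA hB] _].
          have hw : size (rcons q t') = m.+2 by rewrite size_rcons hq.
          move: hA hB; rewrite /chiA /chiB /= Pz1 // dPz1 // => hA hB.
          have := lvlU _ _ _ _ _ _ _ (expf_neq0 _ z0) (mulf_neq0 (lt0r_neq0 N0) (expf_neq0 _ z0)) hA hB.
          by rewrite /rmin in hu; rewrite leNgt hu.
      * move=> t' s; case: s => [|u [|]] // _ ht; apply: indic_E => -[[hA hB] _].
        move: hA hB; rewrite /chiA /chiB /= Pz2 // dPz2 // => hA hB.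
        have := @lvlL m zeta _ _ _ _ _ _ z0 hA hB.
        by rewrite /rL in ht; rewrite leNgt ht.
    + move=> q v s /= /andP [h1 h2] hv; apply: indic_E => -[_ hC].
      have := hC (size q); rewrite nth_cat ltnn subnn /= => /(_ _) hh.
      have : `|v| <= Kb.
        apply: hh; apply/andP; split; first exact: h1.
        by apply: (leq_trans (ltnW h2)); rewrite addnC addn1 ltnW // ltnSn. 
      by rewrite leNgt hv.
  - move=> t s hs ht; apply: indic_E => -[[hA _] hC].
    rewrite subr0 in ht.
    move: hA; rewrite /chiA /= (@Pz_lin _ _ [::] s t) // /= expr0 mulr1 => hA.
    have hb : `|Pz m.+2 zeta (0 :: s)| <= Kb * Z.
      apply: Pz_bound => //; case => [|i] hi /=; first by rewrite normr0.
      exact: (hC i.+1).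
    have e : Pz m.+2 zeta (0 :: s) + t - Pz m.+2 zeta (0 :: s) = t by ring.
    have := ler_normB (Pz m.+2 zeta (0 :: s) + t) (Pz m.+2 zeta (0 :: s)).
    rewrite e => ht2.
    rewrite /X0 in ht; lra.
rewrite lee_fin /rmin /rL /X0 /Z /EN.
rewrite !normrX normrM (ger0_norm (ltW N0)) normrX -keyQ //.
exact: final_arith.
Qed.

End S.

Theorem lemma1 (R : realType) (n : nat) (zeta : R) :
  (2 <= n)%N ->
  exists E : R, exists Q0 : R, forall Q Rr : R,
    1 < Q -> Q0 <= Q -> 0 < Rr ->
    (vol n.+1 (chiA n zeta Q `&` chiB n zeta Rr `&` chiC n Q)
      <= (E * Rr * Q `^ (- n%:R^-1))%:E)%E.
Proof.
case: n => [|[|m]] // _.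
have [z0|z0] := eqVneq zeta 0.
- exists (2^+(m.+3)), 1 => Q Rr Q1 _ R0; rewrite z0; exact: case0.
- exists (@EN R m zeta), 1 => Q Rr Q1 _ R0; exact: caseNZ.
Qed.
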